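(* Let $L$ be even and consider spin-1 degrees of freedom on the sites $\boldsymbol r$ of the $D$-dimensional hypercubic lattice $(\mathbb{Z}/L\mathbb{Z})^D$ with periodic boundary conditions. Let $$H^{(x)}=J\sum_{\langle\boldsymbol r,\boldsymbol r'\rangle}(S^x_{\boldsymbol r}S^x_{\boldsymbol r'}+S^y_{\boldsymbol r}S^y_{\boldsymbol r'})+h\sum_{\boldsymbol r}S^z_{\boldsymbol r}+\Delta\sum_{\boldsymbol r}(S^z_{\boldsymbol r})^2,$$ with real $J,h,\Delta$, the first sum over nearest-neighbour pairs, and let $\mathcal{P}^{(x)}=\sum_{\boldsymbol r}(-1)^{r_1+\cdots+r_D}(S^+_{\boldsymbol r})^2$. Let $\ket\Omega=\ket{-\,-\cdots-}$ be the state with $S^z_{\boldsymbol r}=-1$ on every site. Then (i) $H^{(x)}\ket\Omega=(\Delta-h)L^D\ket\Omega$; (ii) $[H^{(x)},\mathcal{P}^{(x)}]\ket\Omega=2h\,\mathcal{P}^{(x)}\ket\Omega$; (iii) $[[H^{(x)},\mathcal{P}^{(x)}],\mathcal{P}^{(x)}]=0$. Consequently $H^{(x)}(\mathcal{P}^{(x)})^n\ket\Omega=\big(h(2n-L^D)+\Delta L^D\big)(\mathcal{P}^{(x)})^n\ket\Omega$ for all $n\ge0$.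
   Context: $S^x,S^y,S^z$ are the spin-1 matrices acting on a site, $S^\pm=S^x\pm iS^y$; the local basis states are labelled $+,0,-$ by their $S^z$ eigenvalue. $\boldsymbol r=(r_1,\dots,r_D)$. *)

(* Defs.v *)
From HB Require Import structures.
From mathcomp Require Import all_boot all_order all_algebra.
Set Implicit Arguments. Unset Strict Implicit. Unset Printing Implicit Defensive.
Import Order.TTheory GRing.Theory Num.Theory.
Local Open Scope ring_scope.

Section Spin1.
Variable C : numClosedFieldType.

(* Local basis of a spin-1 site: index 0 = '+', 1 = '0', 2 = '-' (S^z = 1, 0, -1). *)
Definition Sx : 'M[C]_3 :=
  (sqrtC 2)^-1 *: \matrix_(i < 3, j < 3)
     (((i : nat) == j.+1) || ((j : nat) == i.+1))%:R.
Definition Sy : 'M[C]_3 :=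
  (sqrtC 2 * 'i)^-1 *: \matrix_(i < 3, j < 3)
     (((j : nat) == i.+1)%:R - ((i : nat) == j.+1)%:R).
Definition Sz : 'M[C]_3 :=
  \matrix_(i < 3, j < 3) ((i == j)%:R * (1 - (i : nat)%:R)).
Definition Splus : 'M[C]_3 := Sx + 'i *: Sy.

Variables D L : nat.

Definition site := {ffun 'I_D -> 'I_L}.
Definition shift (r : site) (k : 'I_D) : site :=
  [ffun j => if j == k then ordS (r j) else r j].
Definition stagger (r : site) : C := (-1) ^+ (\sum_(k < D) (r k : nat))%N.

(* product basis configurations; states are functions config -> C and
   operators are matrix kernels config -> config -> C *)
Definition config := {ffun site -> 'I_3}.
Definition vec := config -> C.
Definition op := config -> config -> C.

Definition opid : op := fun s t => (s == t)%:R.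
Definition opmul (A B : op) : op := fun s t => \sum_(u : config) A s u * B u t.
Definition opsub (A B : op) : op := fun s t => A s t - B s t.
Definition comm (A B : op) : op := opsub (opmul A B) (opmul B A).
Definition opexp (A : op) (n : nat) : op := iter n (opmul A) opid.
Definition apply (A : op) (v : vec) : vec := fun s => \sum_(t : config) A s t * v t.

Definition onsite (r : site) (A : 'M[C]_3) : op :=
  fun s t => A (s r) (t r) * [forall r' : site, (r' != r) ==> (s r' == t r')]%:R.

Definition Hx (J h Delta : C) : op := fun s t =>
  J * (\sum_(r : site) \sum_(k < D)
         (opmul (onsite r Sx) (onsite (shift r k) Sx) s t
          + opmul (onsite r Sy) (onsite (shift r k) Sy) s t))
  + h * (\sum_(r : site) onsite r Sz s t)
  + Delta * (\sum_(r : site) onsite r (Sz *m Sz) s t).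

Definition Px : op := fun s t =>
  \sum_(r : site) stagger r * onsite r (Splus *m Splus) s t.

Definition minus_idx : 'I_3 := @Ordinal 3 2 isT.
Definition allminus : config := [ffun _ => minus_idx].
Definition Omega : vec := fun s => (s == allminus)%:R.

End Spin1.

(* Main.v *)
Require Import Defs.
From HB Require Import structures.
From mathcomp Require Import all_boot all_order all_algebra.
From mathcomp Require Import ring.
From Stdlib Require Import FunctionalExtensionality.
Set Implicit Arguments. Unset Strict Implicit. Unset Printing Implicit Defensive.
Import Order.TTheory GRing.Theory Num.Theory.
Local Open Scope ring_scope.

Section M3.
Variable C : numClosedFieldType.
Definition Em : 'M[C]_3 := \matrix_(i < 3, j < 3) ((j : nat) == i.+1)%:R.
Definition Fm : 'M[C]_3 := \matrix_(i < 3, j < 3) ((i : nat) == j.+1)%:R.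
Definition E2 : 'M[C]_3 := Em *m Em.
Definition cm (X Y : 'M[C]_3) := X *m Y - Y *m X.

Definition o0 : 'I_3 := @Ordinal 3 0 isT.
Definition o1 : 'I_3 := @Ordinal 3 1 isT.
Definition o2 : 'I_3 := @Ordinal 3 2 isT.
Lemma mx3E (A B : 'M[C]_3) i j :
  (A *m B) i j = A i o0 * B o0 j + A i o1 * B o1 j + A i o2 * B o2 j.
Proof.
rewrite mxE !big_ord_recr big_ord0 /=.
have Z : forall x : C, 0 + x = x by move=> x; rewrite add0r.
rewrite Z.
by congr (_ + _ + _); congr (A _ _ * B _ _); apply: val_inj.
Qed.

Lemma mxDE (A B : 'M[C]_3) i j : (A + B) i j = A i j + B i j.
Proof. by rewrite mxE. Qed.
Lemma mxBE (A B : 'M[C]_3) i j : (A - B) i j = A i j - B i j.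
Proof. by rewrite !mxE. Qed.
Lemma mxNE (A : 'M[C]_3) i j : (- A) i j = - A i j.
Proof. by rewrite !mxE. Qed.
Lemma mxZE c (A : 'M[C]_3) i j : (c *: A) i j = c * A i j.
Proof. by rewrite !mxE. Qed.
Lemma mx0E i j : (0 : 'M[C]_3) i j = 0.
Proof. by rewrite !mxE. Qed.

Definition dm (a b : nat) : 'M[C]_3 :=
  \matrix_(i < 3, j < 3) (((i : nat) == a) && ((j : nat) == b))%:R.

Ltac brute := apply/matrixP => - [[|[|[|?]]] ?] [[|[|[|?]]] ?] //;
  rewrite ?(mx3E, mxDE, mxBE, mxNE, mxZE, mx0E) !mxE /=;
  rewrite ?(mulr0n, mulr1n, mulr0, mul0r, mulr1, mul1r, addr0, add0r, subr0, sub0r, subrr) //;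
  try ring.

Lemma E2E : E2 = dm 0 2. Proof. rewrite /E2. brute. Qed.
Lemma WE : cm (Em + Fm) E2 = dm 1 2 - dm 0 1. Proof. rewrite /cm E2E. brute. Qed.
Lemma W'E : cm (Em - Fm) E2 = dm 0 1 - dm 1 2. Proof. rewrite /cm E2E. brute. Qed.
Lemma I1 : cm (cm (Em + Fm) E2) E2 = 0. Proof. rewrite WE /cm E2E. brute. Qed.
Lemma I2 : cm (cm (Em - Fm) E2) E2 = 0. Proof. rewrite W'E /cm E2E. brute. Qed.
Lemma I3 : cm (Sz C) E2 = 2 *: E2. Proof. rewrite /cm E2E. brute. Qed.
Lemma I4 : cm (Sz C *m Sz C) E2 = 0. Proof. rewrite /cm E2E. brute. Qed.

Definition a2 : C := (sqrtC 2)^-1.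
Definition b2 : C := (sqrtC 2 * 'i)^-1.
Definition Q : 'M[C]_3 := Splus C *m Splus C.

Lemma b2E : b2 = - ('i * a2).
Proof. by rewrite /b2 /a2 invfM invCi; ring. Qed.
Lemma a2sq : a2 * a2 = 2^-1.
Proof. by rewrite /a2 -expr2 exprVn sqrtCK. Qed.
Lemma two_neq0 : (2 : C) != 0.
Proof. by rewrite pnatr_eq0. Qed.

Lemma SxE : Sx C = a2 *: (Em + Fm).
Proof. rewrite /Sx; congr (_ *: _); brute. Qed.
Lemma SyE : Sy C = b2 *: (Em - Fm).
Proof. rewrite /Sy; congr (_ *: _); brute. Qed.
Lemma SplusE : Splus C = (2 * a2) *: Em.
Proof.
rewrite /Splus SxE SyE b2E; apply/matrixP => i j; rewrite !mxE.
have Hi : 'i * 'i = -1 :> C by rewrite -expr2 sqrCi.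
by rewrite mulrA mulrN mulrA Hi; ring.
Qed.
Lemma QE : Q = 2 *: E2.
Proof.
rewrite /Q SplusE -scalemxAl -scalemxAr scalerA /E2; congr (_ *: _).
have H : 2 * a2 * (2 * a2) = 2 * 2 * (a2 * a2) by ring.
by rewrite H a2sq -mulrA mulfV ?two_neq0 // mulr1.
Qed.

Lemma cmZl c X Y : cm (c *: X) Y = c *: cm X Y.
Proof. by rewrite /cm -scalemxAl -scalemxAr scalerBr. Qed.
Lemma cmZr c X Y : cm X (c *: Y) = c *: cm X Y.
Proof. by rewrite /cm -scalemxAl -scalemxAr scalerBr. Qed.

Lemma cmSxQ : cm (Sx C) Q = (2 * a2) *: (dm 1 2 - dm 0 1).
Proof. by rewrite SxE QE cmZl cmZr WE scalerA mulrC. Qed.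
Lemma cmSyQ : cm (Sy C) Q = (2 * b2) *: (dm 0 1 - dm 1 2).
Proof. by rewrite SyE QE cmZl cmZr W'E scalerA mulrC. Qed.

Lemma J1 : cm (cm (Sx C) Q) Q = 0.
Proof. by rewrite SxE QE !(cmZl, cmZr) I1 !scaler0. Qed.
Lemma J2 : cm (cm (Sy C) Q) Q = 0.
Proof. by rewrite SyE QE !(cmZl, cmZr) I2 !scaler0. Qed.
Lemma J3 : cm (Sz C) Q = 2 *: Q.
Proof. by rewrite QE cmZr I3. Qed.
Lemma J4 : cm (Sz C *m Sz C) Q = 0.
Proof. by rewrite QE cmZr I4 scaler0. Qed.
Lemma J5 : cm (Sy C) Q = 'i *: cm (Sx C) Q.
Proof.
rewrite cmSyQ cmSxQ b2E scalerA; apply/matrixP => i j; rewrite !mxE; ring.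
Qed.

Definition e1 (i : 'I_3) : C := ((i : nat) == 1)%:R.
Definition e2 (i : 'I_3) : C := ((i : nat) == 2)%:R.

Lemma V1 i : Sx C i o2 = a2 * e1 i.
Proof. rewrite SxE /e1; case: i => [[|[|[|?]]] ?] //; rewrite !mxE /=; ring. Qed.
Lemma V2 i : Sy C i o2 = b2 * e1 i.
Proof. rewrite SyE /e1; case: i => [[|[|[|?]]] ?] //; rewrite !mxE /=; ring. Qed.
Lemma V3 i : cm (Sx C) Q i o2 = 2 * Sx C i o2.
Proof. rewrite cmSxQ V1 /e1; case: i => [[|[|[|?]]] ?] //; rewrite !mxE /=; ring. Qed.
Lemma V4 i : cm (Sy C) Q i o2 = -2 * Sy C i o2.
Proof. rewrite cmSyQ V2 /e1; case: i => [[|[|[|?]]] ?] //; rewrite !mxE /=; ring. Qed.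
Lemma V5 i : Sz C i o2 = -1 * e2 i.
Proof. rewrite /e2; case: i => [[|[|[|?]]] ?] //; rewrite !mxE /=; ring. Qed.
Lemma V6 i : (Sz C *m Sz C) i o2 = e2 i.
Proof. rewrite /e2 mx3E; case: i => [[|[|[|?]]] ?] //; rewrite !mxE /=; ring. Qed.
Lemma ab0 : a2 * a2 + b2 * b2 = 0.
Proof.
rewrite b2E.
have Hi : 'i * 'i = -1 :> C by rewrite -expr2 sqrCi.
have -> : - ('i * a2) * - ('i * a2) = ('i * 'i) * (a2 * a2) by ring.
by rewrite Hi; ring.
Qed.
End M3.

Section Proof.
Variables (C : numClosedFieldType) (D L : nat).
Local Notation site := (site D L).
Local Notation config := (config D L).
Local Notation op := (op C D L).
Local Notation vec := (vec C D L).
Local Notation N := #|config|.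
Local Notation M := 'M[C]_N.

Definition ev (i : 'I_N) : config := enum_val i.
Definition phi (A : op) : M := \matrix_(i, j) A (ev i) (ev j).
Definition cv (v : vec) : 'cV[C]_N := \col_i v (ev i).

Lemma sum_ev (F : config -> C) : \sum_(u : config) F u = \sum_(k < N) F (ev k).
Proof. by rewrite (big_enum_val (A := config)). Qed.

Lemma phi_mul A B : phi (opmul A B) = phi A *m phi B.
Proof.
apply/matrixP => i j; rewrite !mxE /opmul sum_ev.
by apply: eq_bigr => k _; rewrite !mxE.
Qed.

Lemma phi_apply A v : phi A *m cv v = cv (apply A v).
Proof.
apply/matrixP => i j; rewrite !mxE /apply sum_ev.
by apply: eq_bigr => k _; rewrite !mxE.
Qed.

Lemma phi_inj A B : phi A = phi B -> A = B.
Proof.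
move=> /matrixP E; apply: functional_extensionality => s;
apply: functional_extensionality => t.
have := E (enum_rank s) (enum_rank t); rewrite !mxE /ev !enum_rankK //.
Qed.

Lemma cv_inj v w : cv v = cv w -> v = w.
Proof.
move=> /matrixP E; apply: functional_extensionality => s.
have := E (enum_rank s) 0; rewrite !mxE /ev !enum_rankK //.
Qed.

Lemma phi_sub A B : phi (opsub A B) = phi A - phi B.
Proof. by apply/matrixP => i j; rewrite !mxE. Qed.

Lemma phi_comm A B : phi (comm A B) = phi A *m phi B - phi B *m phi A.
Proof. by rewrite /comm phi_sub !phi_mul. Qed.

Lemma phi0 : phi (fun _ _ => 0) = 0.
Proof. by apply/matrixP => i j; rewrite !mxE. Qed.

Lemma phi_id : phi (@opid C D L) = 1%:M.
Proof.
apply/matrixP => i j; rewrite !mxE /opid /ev.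
by rewrite (inj_eq enum_val_inj).
Qed.

Lemma cvZ c v : cv (fun s => c * v s) = c *: cv v.
Proof. by apply/matrixP => i j; rewrite !mxE. Qed.


Definition agree (r : site) (s u : config) :=
  [forall r' : site, (r' != r) ==> (s r' == u r')].
Definition agree2 (r r' : site) (s u : config) :=
  [forall q : site, (q != r) && (q != r') ==> (s q == u q)].
Definition upd (s : config) (r : site) (x : 'I_3) : config :=
  [ffun q => if q == r then x else s q].

Lemma upd_at s r x : upd s r x r = x.
Proof. by rewrite ffunE eqxx. Qed.
Lemma upd_off s r x q : q != r -> upd s r x q = s q.
Proof. by rewrite ffunE => /negbTE ->. Qed.

Lemma sum_delta (T : finType) (a : T) (F : T -> C) :
  \sum_u F u * (u == a)%:R = F a.
Proof.
rewrite (bigD1 a) //= eqxx mulr1 big1 ?addr0 // => u /negbTE ->.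
by rewrite mulr0.
Qed.

Lemma upd_eq s r x u : (u == upd s r x) = agree r s u && (x == u r).
Proof.
apply/eqP/andP => [->|[/forallP Ha /eqP Hx]].
  split; last by rewrite upd_at.
  by apply/forallP => q; apply/implyP => Hq; rewrite upd_off.
apply/ffunP => q; rewrite ffunE; case: eqP => [->//|/eqP Hq].
by apply/esym/eqP; move/implyP: (Ha q); apply.
Qed.

Lemma Lred r s (F : config -> C) :
  \sum_(u : config) F u * (agree r s u)%:R = \sum_(x < 3) F (upd s r x).
Proof.
have -> : \sum_(x < 3) F (upd s r x) =
    \sum_(x < 3) \sum_(u : config) F u * (u == upd s r x)%:R.
  by apply: eq_bigr => x _; rewrite sum_delta.
rewrite exchange_big; apply: eq_bigr => u _.
under eq_bigr do rewrite upd_eq.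
rewrite -big_distrr /=.
case: (agree r s u) => /=; last by rewrite big1 ?mulr0.
rewrite (eq_bigr (fun x => (fun _ => (1:C)) x * (x == u r)%:R)) ?sum_delta //.
by move=> x _; rewrite mul1r.
Qed.

Lemma agree_upd r s x t : agree r (upd s r x) t = agree r s t.
Proof.
apply: eq_forallb => q; case: (eqVneq q r) => [->|Hq] //=.
by rewrite upd_off.
Qed.

Lemma onsite_mul (r : site) (A B : 'M[C]_3) :
  opmul (onsite r A) (onsite r B) = onsite r (A *m B).
Proof.
apply: functional_extensionality => s; apply: functional_extensionality => t.
rewrite /opmul /onsite -/(agree r s _).
transitivity (\sum_(u : config)
   (A (s r) (u r) * B (u r) (t r) * (agree r u t)%:R) * (agree r s u)%:R).
  by apply: eq_bigr => u _; rewrite /agree; ring.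
rewrite Lred; under eq_bigr do rewrite upd_at agree_upd.
by rewrite -big_distrl /= mxE /agree.
Qed.

Lemma agree_upd2 r r' s x t : r != r' ->
  agree r' (upd s r x) t = (x == t r) && agree2 r r' s t.
Proof.
move=> Hrr; apply/forallP/andP => [H|[/eqP Hx /forallP H] q].
  split.
    by have := H r; rewrite Hrr upd_at.
  apply/forallP => q; apply/implyP => /andP [H1 H2].
  by have := H q; rewrite H2 upd_off.
apply/implyP => Hq; case: (eqVneq q r) => [->|Hqr].
  by rewrite upd_at Hx.
by rewrite upd_off //; have := H q; rewrite Hqr Hq.
Qed.

Lemma onsite_mul2 (r r' : site) (A B : 'M[C]_3) s t : r != r' ->
  opmul (onsite r A) (onsite r' B) s t
  = A (s r) (t r) * B (s r') (t r') * (agree2 r r' s t)%:R.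
Proof.
move=> Hrr; rewrite /opmul /onsite -/(agree r s _).
transitivity (\sum_(u : config)
   (A (s r) (u r) * B (u r') (t r') * (agree r' u t)%:R) * (agree r s u)%:R).
  by apply: eq_bigr => u _; rewrite /agree; ring.
rewrite Lred; under eq_bigr do rewrite upd_at upd_off 1?eq_sym // agree_upd2 //.
under eq_bigr do rewrite -mulnb natrM mulrA.
by rewrite -big_distrl /= (sum_delta (t r) (fun x => A (s r) x * B (s r') (t r'))).
Qed.

Lemma onsite_comm (r r' : site) (A B : 'M[C]_3) : r != r' ->
  opmul (onsite r A) (onsite r' B) = opmul (onsite r' B) (onsite r A).
Proof.
move=> Hrr; apply: functional_extensionality => s; apply: functional_extensionality => t.
rewrite onsite_mul2 // onsite_mul2 1?eq_sym //.
have -> : agree2 r' r s t = agree2 r r' s t.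
  by apply: eq_forallb => q; rewrite andbC.
ring.
Qed.


Lemma ordS_odd (HL : ~~ odd L) (i : 'I_L) : odd (ordS i) = ~~ odd i.
Proof.
rewrite /ordS /=; have Hi := ltn_ord i.
have [lt|ge] := ltnP i.+1 L; first by rewrite modn_small.
have E : i.+1 = L by apply/eqP; rewrite eqn_leq Hi ge.
have : ~~ odd (val i).+1 by rewrite E.
move=> /negPn Hodd; rewrite E modnn /=; apply/esym/negbF; exact: Hodd.
Qed.

Lemma shift_neq (HL : ~~ odd L) (r : site) k : shift r k != r.
Proof.
apply/eqP => /ffunP /(_ k); rewrite ffunE eqxx => /(congr1 val) /=.
have Hi := ltn_ord (r k).
have [lt|ge] := ltnP (r k).+1 L.
  by rewrite modn_small // => /eqP; rewrite -[X in X == _]addn1 -{2}[val (r k)]addn0 eqn_add2l.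
have E : (r k).+1 = L by apply/eqP; rewrite eqn_leq Hi ge.
have H : ~~ odd (r k : nat).+1 by rewrite E.
rewrite E modnn => E0; move: H; rewrite -E0 //.
Qed.

Lemma stagger_shift (HL : ~~ odd L) (r : site) k :
  stagger C (shift r k) = - stagger C r.
Proof.
rewrite /stagger (bigD1 k) //= [in RHS](bigD1 k) //= ffunE eqxx.
have -> : (\sum_(i < D | i != k) shift r k i = \sum_(i < D | i != k) r i)%N.
  by apply: eq_bigr => i Hi; rewrite ffunE (negbTE Hi).
rewrite -signr_odd -[in RHS]signr_odd !oddD ordS_odd //.
by case: (odd (r k)); case: (odd _); rewrite /= ?expr0 ?expr1 ?opprK.
Qed.

Lemma card_site : #|site| = (L ^ D)%N.
Proof. by rewrite card_ffun !card_ord. Qed.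

Definition O (r : site) (X : 'M[C]_3) : M := phi (onsite r X).

Lemma O_mul r X Y : O r X *m O r Y = O r (X *m Y).
Proof. by rewrite /O -phi_mul onsite_mul. Qed.
Lemma O_comm r r' X Y : r != r' -> O r X *m O r' Y = O r' Y *m O r X.
Proof. by move=> H; rewrite /O -!phi_mul onsite_comm. Qed.
Lemma O_add r X Y : O r (X + Y) = O r X + O r Y.
Proof. by apply/matrixP => i j; rewrite !mxE /onsite !mxE mulrDl. Qed.
Lemma O_scale r c X : O r (c *: X) = c *: O r X.
Proof. by apply/matrixP => i j; rewrite !mxE /onsite !mxE mulrA. Qed.
Lemma O_sub r X Y : O r (X - Y) = O r X - O r Y.
Proof. by apply/matrixP => i j; rewrite !mxE /onsite !mxE mulrBl. Qed.
Lemma O_0 r : O r 0 = 0.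
Proof. by apply/matrixP => i j; rewrite !mxE /onsite !mxE mul0r. Qed.

Definition Pm : M := \sum_(r : site) stagger C r *: O r (Q C).
Lemma PmE : phi (@Px C D L) = Pm.
Proof.
apply/matrixP => i j; rewrite /Pm summxE !mxE /Px.
by apply: eq_bigr => r _; rewrite !mxE.
Qed.

Definition bond (r : site) k : M :=
  O r (Sx C) *m O (shift r k) (Sx C) + O r (Sy C) *m O (shift r k) (Sy C).
Definition Hm (J h Delta : C) : M :=
  J *: (\sum_(r : site) \sum_(k < D) bond r k)
  + h *: (\sum_(r : site) O r (Sz C))
  + Delta *: (\sum_(r : site) O r (Sz C *m Sz C)).
Lemma HmE J h Delta : phi (Hx J h Delta) = Hm J h Delta.
Proof.
apply/matrixP => i j; rewrite /Hm !mxE /Hx !summxE; congr (_ * _ + _ * _ + _ * _).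
- apply: eq_bigr => r _; rewrite summxE; apply: eq_bigr => k _.
  by rewrite /bond -!phi_mul !mxE.
- by apply: eq_bigr => r _; rewrite !mxE.
- by apply: eq_bigr => r _; rewrite !mxE.
Qed.


Definition cmN (A B : M) : M := locked (A *m B - B *m A).

Lemma cmNE A B : cmN A B = A *m B - B *m A.
Proof. by rewrite /cmN -lock. Qed.

Lemma cmN_addl A B P : cmN (A + B) P = cmN A P + cmN B P.
Proof. by rewrite /cmN -!lock mulmxDl mulmxDr opprD addrACA. Qed.
Lemma cmN_scalel c A P : cmN (c *: A) P = c *: cmN A P.
Proof. by rewrite /cmN -!lock -scalemxAl -scalemxAr scalerBr. Qed.
Lemma cmN_scaler c A P : cmN A (c *: P) = c *: cmN A P.
Proof. by rewrite /cmN -!lock -scalemxAl -scalemxAr scalerBr. Qed.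
Lemma cmN_suml (I : finType) (F : I -> M) P :
  cmN (\sum_i F i) P = \sum_i cmN (F i) P.
Proof.
under [RHS]eq_bigr do rewrite cmNE.
by rewrite cmNE mulmx_suml mulmx_sumr sumrB.
Qed.
Lemma cmN_sumr (I : finType) (F : I -> M) A :
  cmN A (\sum_i F i) = \sum_i cmN A (F i).
Proof.
under [RHS]eq_bigr do rewrite cmNE.
by rewrite cmNE mulmx_suml mulmx_sumr sumrB.
Qed.
Lemma cmN_mull A B P : cmN (A *m B) P = A *m cmN B P + cmN A P *m B.
Proof. by rewrite /cmN -!lock mulmxBr mulmxBl !mulmxA addrA subrK. Qed.

Lemma scl2 c d (A B : M) : (c *: A) *m (d *: B) = (c * d) *: (A *m B).
Proof. by rewrite -scalemxAl -scalemxAr scalerA. Qed.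

Lemma L1 a X : cmN (O a X) Pm = stagger C a *: O a (cm X (Q C)).
Proof.
rewrite /Pm cmN_sumr (bigD1 a) //= big1 ?addr0.
  by rewrite cmN_scaler cmNE !O_mul -O_sub.
by move=> r Hr; rewrite cmN_scaler cmNE O_comm 1?eq_sym // subrr scaler0.
Qed.

Lemma single0 r X : cm (cm X (Q C)) (Q C) = 0 -> cmN (cmN (O r X) Pm) Pm = 0.
Proof. by move=> H; rewrite L1 cmN_scalel L1 H O_0 !scaler0. Qed.

Lemma bondDC r b X : cm (cm X (Q C)) (Q C) = 0 ->
  cmN (cmN (O r X *m O b X) Pm) Pm
  = (2 * (stagger C r * stagger C b)) *: (O r (cm X (Q C)) *m O b (cm X (Q C))).
Proof.
move=> H; rewrite cmN_mull !L1 cmN_addl !cmN_mull !cmN_scalel !L1.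
rewrite H !O_0 !scaler0 mulmx0 mul0mx add0r addr0.
by rewrite scl2 -scalerDl; congr (_ *: _); ring.
Qed.

Lemma dc_sum0 (I : finType) (F : I -> M) :
  (forall i, cmN (cmN (F i) Pm) Pm = 0) -> cmN (cmN (\sum_i F i) Pm) Pm = 0.
Proof. by move=> H; rewrite !cmN_suml big1. Qed.

Lemma Hm_dc J h Delta : cmN (cmN (Hm J h Delta) Pm) Pm = 0.
Proof.
rewrite /Hm !cmN_addl !cmN_scalel.
have H4 : cm (cm (Sz C *m Sz C) (Q C)) (Q C) = 0.
  by rewrite J4 /cm mul0mx mulmx0 subrr.
rewrite (dc_sum0 (fun r => single0 r H4)).
have H3 : cm (cm (Sz C) (Q C)) (Q C) = 0 by rewrite J3 cmZl /cm subrr scaler0.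
rewrite (dc_sum0 (fun r => single0 r H3)).
rewrite dc_sum0 ?scaler0 ?addr0 // => r; apply: dc_sum0 => k.
rewrite /bond !cmN_addl !bondDC ?J1 ?J2 // J5 !O_scale scl2.
have Hi : 'i * 'i = -1 :> C by rewrite -expr2 sqrCi.
by rewrite Hi scaleN1r scalerN addrN.
Qed.


Definition prodv (f : site -> 'I_3 -> C) : vec := fun s => \prod_r f r (s r).
Definition fupd (f : site -> 'I_3 -> C) (a : site) (g : 'I_3 -> C) :=
  fun r => if r == a then g else f r.
Definition mv (X : 'M[C]_3) (u : 'I_3 -> C) : 'I_3 -> C :=
  fun i => \sum_j X i j * u j.
Definition col (X : 'M[C]_3) : 'I_3 -> C := fun i => X i o2.
Definition e2s : site -> 'I_3 -> C := fun _ => e2 C.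

Lemma apply_onsite_prod a X f :
  apply (onsite a X) (prodv f) = prodv (fupd f a (mv X (f a))).
Proof.
apply: functional_extensionality => s.
rewrite /apply /onsite -/(agree a s _).
transitivity (\sum_(t : config)
   (X (s a) (t a) * prodv f t) * (agree a s t)%:R).
  by apply: eq_bigr => t _; rewrite /agree; ring.
rewrite Lred /prodv [in RHS](bigD1 a) //= /fupd eqxx /mv big_distrl /=.
apply: eq_bigr => x _; rewrite (bigD1 a) //= upd_at.
have -> : \prod_(r | r != a) f r (upd s a x r) =
          \prod_(r | r != a) (if r == a then mv X (f a) else f r) (s r).
  by apply: eq_bigr => r Hr; rewrite upd_off // (negbTE Hr).
by rewrite mulrA.
Qed.

Lemma Omega_prod : @Omega C D L = prodv e2s.
Proof.
apply: functional_extensionality => s; rewrite /Omega /prodv /e2s /e2.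
have [->|Hs] := eqVneq s (allminus D L).
  by rewrite big1 // => r _; rewrite ffunE.
have [r Hr] : exists r, s r != minus_idx.
  apply/existsP; apply: contraR Hs; rewrite negb_exists => /forallP H.
  by apply/eqP/ffunP => r; rewrite ffunE; apply/eqP; have := H r; rewrite negbK.
rewrite (bigD1 r) //=.
have -> : ((s r : nat) == 2)%N = false by apply/negbTE.
by rewrite mul0r.
Qed.

Lemma mv_e2 X : mv X (e2 C) = col X.
Proof.
apply: functional_extensionality => i; rewrite /mv /col /e2.
rewrite (bigD1 o2) //= mulr1 big1 ?addr0 // => j Hj.
have -> : ((j : nat) == 2)%N = false by apply/negbTE.
by rewrite mulr0.
Qed.

Definition cvO : 'cV[C]_N := cv (@Omega C D L).

Lemma O_prodv a X f :
  O a X *m cv (prodv f) = cv (prodv (fupd f a (mv X (f a)))).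
Proof. by rewrite /O phi_apply apply_onsite_prod. Qed.

Lemma OneSite a X : O a X *m cvO = cv (prodv (fupd e2s a (col X))).
Proof. by rewrite /cvO Omega_prod O_prodv /e2s mv_e2. Qed.

Lemma TwoSite r b X Y : r != b ->
  O r X *m (O b Y *m cvO) = cv (prodv (fupd (fupd e2s b (col Y)) r (col X))).
Proof.
move=> H; rewrite OneSite O_prodv; congr (cv (prodv (fupd _ _ _))).
by rewrite /fupd (negbTE H) /e2s mv_e2.
Qed.

Definition sc (c : C) (g : 'I_3 -> C) : 'I_3 -> C := fun i => c * g i.
Lemma prodv_scale f a c g :
  prodv (fupd f a (sc c g)) = fun s => c * prodv (fupd f a g) s.
Proof.
apply: functional_extensionality => s; rewrite /prodv (bigD1 a) //=.
rewrite [in RHS](bigD1 a) //= /fupd eqxx /sc mulrA; congr (_ * _).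
by apply: eq_bigr => r Hr; rewrite (negbTE Hr).
Qed.

Lemma fupd_comm f (a b : site) u v : a != b ->
  fupd (fupd f a u) b v = fupd (fupd f b v) a u.
Proof.
move=> H; apply: functional_extensionality => r; rewrite /fupd.
case Ha: (r == a); case Hb: (r == b) => //.
by move: H; rewrite -(eqP Ha) -(eqP Hb) eqxx.
Qed.

Lemma fupd_same f a : fupd f a (f a) = f.
Proof.
apply: functional_extensionality => r; rewrite /fupd.
by case: (eqVneq r a) => [->|].
Qed.


Lemma colSx : col (Sx C) = sc (a2 C) (e1 C).
Proof. by apply: functional_extensionality => i; rewrite /col V1. Qed.
Lemma colSy : col (Sy C) = sc (b2 C) (e1 C).
Proof. by apply: functional_extensionality => i; rewrite /col V2. Qed.
Lemma colSz : col (Sz C) = sc (-1) (e2 C).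
Proof. by apply: functional_extensionality => i; rewrite /col V5. Qed.
Lemma colSz2 : col (Sz C *m Sz C) = e2 C.
Proof. by apply: functional_extensionality => i; rewrite /col V6. Qed.
Lemma colWx : col (cm (Sx C) (Q C)) = sc 2 (col (Sx C)).
Proof. by apply: functional_extensionality => i; rewrite /col V3. Qed.
Lemma colWy : col (cm (Sy C) (Q C)) = sc (-2) (col (Sy C)).
Proof. by apply: functional_extensionality => i; rewrite /col V4. Qed.

Lemma prodv_scale2 f (a b : site) c d u v : a != b ->
  prodv (fupd (fupd f b (sc c u)) a (sc d v))
  = fun s => (c * d) * prodv (fupd (fupd f b u) a v) s.
Proof.
move=> H; have H' : b != a by rewrite eq_sym.
apply: functional_extensionality => s.
rewrite (prodv_scale (fupd f b (sc c u)) a d v) /= fupd_comm //.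
rewrite (prodv_scale (fupd f a v) b c u) /= fupd_comm //.
ring.
Qed.

Lemma cvO_prod : cvO = cv (prodv e2s).
Proof. by rewrite /cvO Omega_prod. Qed.

Lemma OneSite_scaled r X c : col X = sc c (e2 C) -> O r X *m cvO = c *: cvO.
Proof.
move=> H; rewrite OneSite H (prodv_scale e2s r c (e2 C)) -cvZ.
have -> : fupd e2s r (e2 C) = e2s by exact: fupd_same.
by rewrite Omega_prod.
Qed.

Lemma bond0 (HL : ~~ odd L) r k : bond r k *m cvO = 0.
Proof.
have Hn : r != shift r k by rewrite eq_sym shift_neq.
rewrite /bond mulmxDl -!mulmxA !TwoSite // colSx colSy (prodv_scale2 e2s (a2 C) (a2 C) (e1 C) (e1 C) Hn) (prodv_scale2 e2s (b2 C) (b2 C) (e1 C) (e1 C) Hn) !cvZ.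
by rewrite -scalerDl mulrC ab0 scale0r.
Qed.

Lemma H_Omega (HL : ~~ odd L) J h Delta :
  Hm J h Delta *m cvO = ((Delta - h) * (L ^ D)%:R) *: cvO.
Proof.
rewrite /Hm !mulmxDl -!scalemxAl !mulmx_suml.
rewrite big1 ?scaler0 ?add0r; last first.
  by move=> r _; rewrite mulmx_suml big1 // => k _; apply: bond0.
have Hz : forall r, O r (Sz C) *m cvO = (-1) *: cvO.
  by move=> r; apply: OneSite_scaled; rewrite colSz.
have Hz2 : forall r, O r (Sz C *m Sz C) *m cvO = 1 *: cvO.
  move=> r; apply: OneSite_scaled; rewrite colSz2.
  by apply: functional_extensionality => i; rewrite /sc mul1r.
have -> : \sum_(r : site) O r (Sz C) *m cvO = \sum_(r : site) (-1) *: cvO.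
  by apply: eq_bigr => r _; apply: Hz.
have -> : \sum_(r : site) O r (Sz C *m Sz C) *m cvO = \sum_(r : site) 1 *: cvO.
  by apply: eq_bigr => r _; apply: Hz2.
rewrite !sumr_const card_site -!scaler_nat !scalerA -scalerDl.
congr (_ *: _); ring.
Qed.


Lemma prodv_scale_in f (r b : site) c u v : r != b ->
  prodv (fupd (fupd f b (sc c u)) r v) = fun s => c * prodv (fupd (fupd f b u) r v) s.
Proof.
move=> H; have H' : b != r by rewrite eq_sym.
apply: functional_extensionality => s.
by rewrite fupd_comm // (prodv_scale (fupd f r v) b c u) /= fupd_comm.
Qed.

Lemma BondOmega (r b : site) X W c : r != b -> stagger C b = - stagger C r ->
  col W = sc c (col X) ->
  (O r X *m (stagger C b *: O b W) + (stagger C r *: O r W) *m O b X) *m cvO = 0.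
Proof.
move=> Hn He Hc.
rewrite mulmxDl -!mulmxA -scalemxAl -scalemxAr -scalemxAl !TwoSite // Hc.
rewrite (prodv_scale_in e2s c (col X) (col X) Hn).
rewrite (prodv_scale (fupd e2s b (col X)) r c (col X)).
by rewrite !cvZ !scalerA -scalerDl He mulNr addNr scale0r.
Qed.

Lemma K_Omega (HL : ~~ odd L) J h Delta :
  cmN (Hm J h Delta) Pm *m cvO = (2 * h) *: (Pm *m cvO).
Proof.
rewrite /Hm !cmN_addl !cmN_scalel !cmN_suml.
have -> : \sum_(r : site) cmN (O r (Sz C)) Pm = 2 *: Pm.
  rewrite /Pm scaler_sumr; apply: eq_bigr => r _.
  by rewrite L1 J3 O_scale !scalerA mulrC.
have -> : \sum_(r : site) cmN (O r (Sz C *m Sz C)) Pm = 0.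
  by apply: big1 => r _; rewrite L1 J4 O_0 scaler0.
have Hb : forall r k, cmN (bond r k) Pm *m cvO = 0.
  move=> r k; have Hn : r != shift r k by rewrite eq_sym shift_neq.
  rewrite /bond cmN_addl !cmN_mull !L1 mulmxDl.
  rewrite (BondOmega Hn (stagger_shift HL r k) colWx).
  by rewrite (BondOmega Hn (stagger_shift HL r k) colWy) addr0.
rewrite scaler0 addr0 mulmxDl -!scalemxAl scalerA.
rewrite [h * 2]mulrC mulmx_suml big1 ?scaler0 ?add0r // => r _.
by rewrite cmN_suml mulmx_suml big1.
Qed.


Definition Pn n : M := iter n (mulmx Pm) 1%:M.

Lemma phi_opexp n : phi (opexp (@Px C D L) n) = Pn n.
Proof.
elim: n => [|n IH]; first exact: phi_id.
rewrite /opexp /= phi_mul PmE; rewrite /opexp in IH; by rewrite IH.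
Qed.

Lemma comm_Pn A n : A *m Pm = Pm *m A -> A *m Pn n = Pn n *m A.
Proof.
move=> H; elim: n => [|n IH] /=; first by rewrite mulmx1 mul1mx.
by rewrite mulmxA H -mulmxA IH mulmxA.
Qed.

Lemma tower (HL : ~~ odd L) J h Delta n :
  Hm J h Delta *m (Pn n *m cvO)
  = (h * ((2 * n)%:R - (L ^ D)%:R) + Delta * (L ^ D)%:R) *: (Pn n *m cvO).
Proof.
elim: n => [|n IH].
  rewrite /= mul1mx H_Omega //; congr (_ *: _); rewrite muln0; ring.
have HP : Hm J h Delta *m Pm = Pm *m Hm J h Delta + cmN (Hm J h Delta) Pm.
  by rewrite cmNE addrC subrK.
have HK : cmN (Hm J h Delta) Pm *m Pm = Pm *m cmN (Hm J h Delta) Pm.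
  by apply/eqP; rewrite -subr_eq0 -cmNE Hm_dc.
rewrite /= -mulmxA mulmxA HP mulmxDl -mulmxA IH -scalemxAr.
rewrite mulmxA (comm_Pn _ HK) -mulmxA K_Omega // -scalemxAr.
rewrite [Pn n *m (Pm *m cvO)]mulmxA -(comm_Pn n (erefl (Pm *m Pm))) -mulmxA -scalerDl.
congr (_ *: _).
have -> : ((2 * n.+1)%:R : C) = (2 * n)%:R + 2 by rewrite mulnS addnC natrD.
ring.
Qed.

End Proof.

Theorem mainTheorem7 (C : numClosedFieldType) (D L : nat) (J h Delta : C)
  (HL : ~~ odd L) (HJ : J \is Num.real) (Hh : h \is Num.real)
  (HDelta : Delta \is Num.real) :
  let H := @Hx C D L J h Delta in
  let P := @Px C D L in
  let Om := @Omega C D L in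
  [/\ apply H Om = (fun s => ((Delta - h) * (L ^ D)%:R) * Om s),
      apply (comm H P) Om = (fun s => (2 * h) * apply P Om s),
      comm (comm H P) P = (fun _ _ => 0)
    & forall n : nat,
      apply H (apply (opexp P n) Om)
      = (fun s => (h * ((2 * n)%:R - (L ^ D)%:R) + Delta * (L ^ D)%:R)
                  * apply (opexp P n) Om s)].
Proof.
move=> H P Om; rewrite /H /P /Om; split.
- apply: cv_inj; rewrite -phi_apply HmE cvZ; exact: H_Omega.
- apply: cv_inj; rewrite -phi_apply phi_comm HmE PmE cvZ -phi_apply PmE -cmNE.
  exact: K_Omega.
- apply: phi_inj; rewrite phi0 !phi_comm HmE PmE -!cmNE; exact: Hm_dc.
- move=> n; apply: cv_inj; rewrite cvZ -!phi_apply HmE phi_opexp; exact: tower.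
Qed.
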